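(* Consider the multi-agent system $\dot x_i(t)=u_i(t)$, $i=1,\dots,N$, $x_i\in\mathbb{R}$, with input, for $t\in[t_k,t_{k+1})$, $u_i(t)=0$ if $t_k\in\Xi(0,+\infty)$ and $u_i(t)=\sum_{j=1}^N a_{ij}(x_j(t_k)-x_i(t_k))$ if $t_k\in\Theta(0,+\infty)$, where the Laplacian $\mathscr{L}$ is symmetric and irreducible, $t_1=0$, $\Delta_k:=t_{k+1}-t_k$, and $\xi$ is a DoS sequence that is not an edge case. Suppose there exist finite constants $\check t\geqslant 0$, $\underline{\Delta}$, $\bar\Delta$ such that $0<\underline{\Delta}\leqslant\Delta_k<+\infty$ for all $t_k\geqslant 0$ and $\Delta_k\leqslant\bar\Delta$ for all $t_k\geqslant\check t$, where $\lvert 1-\bar\Delta\lambda_N(\mathscr{L})\rvert<1$ and $B_d+B_f\bar\Delta<1$ for some duration-bound $B_d$ and frequency-bound $B_f$ of $\xi$. Then the system reaches average consensus: $\lim_{t\to+\infty}\big(x_i(t)-\frac1N\sum_{j=1}^Nx_j(0)\big)=0$ for all $i$.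
   Context: A DoS sequence $\xi=\{H_n\}$ is a finite or infinite sequence of sets $H_n := \{h_n\}\cup[h_n,h_n+\tau_n)$, where $h_1\geqslant 0$, $\tau_n\geqslant 0$ and $h_{n+1} > h_n+\tau_n$ for all $n$. For $0\leqslant \tau\leqslant s$ let $\Xi(\tau,s) := \bigcup_n H_n\cap[\tau,s]$, $\Theta(\tau,s):=[\tau,s]\setminus\Xi(\tau,s)$, $n_\xi(\tau,s) := \operatorname{card}(\{h_n\}_n\cap[\tau,s])$; $\Xi(0,+\infty)=\bigcup_nH_n$, $\Theta(0,+\infty)=[0,+\infty)\setminus\Xi(0,+\infty)$; $\lvert\cdot\rvert$ is Lebesgue measure. A constant $B_d\in[0,1]$ is a duration-bound of $\xi$ if there is $0<\kappa<+\infty$ with $\lvert \Xi(0,t)\rvert\leqslant \kappa + B_d t$ for all $t\geqslant 0$. A constant $B_f\in[0,+\infty)$ is a frequency-bound of $\xi$ if there is an integer $0<\Lambda<+\infty$ with $n_\xi(0,t)\leqslant \Lambda + B_f t$ for all $t\geqslant 0$; if no such finite $B_f$ exists, the frequency-bound is $+\infty$. $\mathcal{D}(\xi)$, $\mathcal{F}(\xi)$ are the sets of duration- and frequency-bounds. $\xi$ is an edge case if (i) $\inf\mathcal{D}(\xi)=1$, or (ii) $\inf\mathcal{F}(\xi)=+\infty$, or (iii) for every $\Gamma>0$ there is $n$ with $\tau_n>\Gamma$. Network: $a_{ij}\in\{0,1\}$, $a_{ij}=1$ iff agents $i,j$ are connected; Laplacian $\mathscr{L}=(l_{ij})$ with $l_{ij}=-a_{ij}$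 ($i\neq j$), $l_{ii}=\sum_{j\neq i}a_{ij}$; its eigenvalues are $0=\lambda_1(\mathscr{L})<\lambda_2(\mathscr{L})\leqslant\cdots\leqslant\lambda_N(\mathscr{L})$. *)

(* Defs.v *)
From HB Require Import structures.
From mathcomp Require Import all_boot all_order all_algebra.
From mathcomp Require Import all_classical all_reals all_analysis.
Set Implicit Arguments. Unset Strict Implicit. Unset Printing Implicit Defensive.
Import Order.TTheory GRing.Theory Num.Theory.
Import numFieldNormedType.Exports.
Local Open Scope classical_set_scope.
Local Open Scope ring_scope.

Section DefsSec.
Variable R : realType.

(* A DoS sequence is given by (K, h, tau): K = Some m means the sequence has
   exactly m elements (indices 0..m-1), K = None means it is infinite.
   Indexing starts at 0 (the paper's H_1 is our index 0). *)
Definition in_seq (K : option nat) (n : nat) : bool :=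
  if K is Some m then (n < m)%N else true.

Definition DoS_seq (K : option nat) (h tau : nat -> R) : Prop :=
  (in_seq K 0 -> 0 <= h 0%N) /\
  (forall n, in_seq K n -> 0 <= tau n) /\
  (forall n, in_seq K n.+1 -> h n + tau n < h n.+1).

Definition H_set (h tau : nat -> R) (n : nat) : set R :=
  [set t | t = h n \/ (h n <= t /\ t < h n + tau n)].

Definition Xi_all (K : option nat) (h tau : nat -> R) : set R :=
  \bigcup_(n in [set n | in_seq K n]) H_set h tau n.

Definition Xi (K : option nat) (h tau : nat -> R) (a b : R) : set R :=
  Xi_all K h tau `&` `[a, b].

Definition Theta_all (K : option nat) (h tau : nat -> R) : set R :=
  `[0, +oo[ `\` Xi_all K h tau.

Definition pulse_times (K : option nat) (h : nat -> R) : set R :=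
  [set h n | n in [set n | in_seq K n]].

(* card(A) <= c, for a possibly infinite set A of reals *)
Definition card_le (A : set R) (c : R) : Prop :=
  forall s : seq R, uniq s -> (forall y, y \in s -> A y) -> (size s)%:R <= c.

Definition duration_bound (K : option nat) (h tau : nat -> R) (Bd : R) : Prop :=
  0 <= Bd <= 1 /\
  exists kappa : R, 0 < kappa /\
    forall t : R, 0 <= t ->
      (lebesgue_measure (Xi K h tau 0 t) <= (kappa + Bd * t)%:E)%E.

Definition duration_bounds (K : option nat) (h tau : nat -> R) : set R :=
  [set Bd | duration_bound K h tau Bd].

Definition frequency_bound (K : option nat) (h : nat -> R) (Bf : R) : Prop :=
  0 <= Bf /\
  exists Lambda : nat, (0 < Lambda)%N /\
    forall t : R, 0 <= t ->
      card_le (pulse_times K h `&` `[0, t]) (Lambda%:R + Bf * t).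

Definition frequency_bounds (K : option nat) (h : nat -> R) : set (\bar R) :=
  [set y | exists2 b, frequency_bound K h b & y = b%:E] `|`
  [set y | y = +oo%E /\ ~ (exists b, frequency_bound K h b)].

Definition edge_case (K : option nat) (h tau : nat -> R) : Prop :=
  inf (duration_bounds K h tau) = 1 \/
  ereal_inf (frequency_bounds K h) = +oo%E \/
  (forall Gamma : R, 0 < Gamma -> exists n, in_seq K n /\ Gamma < tau n).

Definition laplacian (N : nat) (a : 'M[R]_N) : 'M[R]_N :=
  \matrix_(i, j) if i == j then \sum_(k | k != i) a i k else - a i j.

(* irreducible matrix: not permutation-similar to a block upper triangular
   matrix, i.e. there is no nonempty proper index set S with A i j = 0 for
   all i in S, j not in S *)
Definition irreducible_mx (N : nat) (A : 'M[R]_N) : Prop :=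
  forall S : {set 'I_N}, S != finset.set0 -> S != finset.setT ->
    exists i j, [/\ i \in S, j \notin S & A i j != 0].

Definition max_eigenvalue (N : nat) (A : 'M[R]_N) (lamN : R) : Prop :=
  eigenvalue A lamN /\ (forall mu, eigenvalue A mu -> mu <= lamN).

(* control input on [t_k, t_{k+1}), evaluated with the sample time s = t_k *)
Definition ctrl_input (N : nat) (a : 'M[R]_N) (K : option nat) (h tau : nat -> R)
    (x : 'I_N -> R -> R) (s : R) (i : 'I_N) : R :=
  if `[< Xi_all K h tau s >] then 0
  else \sum_(j < N) a i j * (x j s - x i s).

End DefsSec.

(* Main.v *)
Require Import Defs.
From HB Require Import structures.
From mathcomp Require Import all_boot all_order all_algebra.
From mathcomp Require Import all_classical all_reals all_analysis.
From mathcomp Require Import ring lra.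
Import Order.TTheory GRing.Theory Num.Theory.
Import numFieldNormedType.Exports.
Local Open Scope classical_set_scope.
Local Open Scope ring_scope.
Set Implicit Arguments. Unset Strict Implicit. Unset Printing Implicit Defensive.

Section LA.
Variable R : realType.

Definition bil n (S : 'M[R]_n) (u v : 'rV[R]_n) : R := (u *m S *m v^T) 0 0.
Definition nrm2 n (v : 'rV[R]_n) : R := (v *m v^T) 0 0.

Lemma bilE n (S : 'M[R]_n) u v : bil S u v = \sum_i u 0 i * \sum_j S i j * v 0 j.
Proof.
rewrite /bil -mulmxA mxE; apply: eq_bigr => i _; congr (_ * _).
by rewrite mxE; apply: eq_bigr => j _; rewrite mxE.
Qed.

Lemma nrm2E n (v : 'rV[R]_n) : nrm2 v = \sum_i v 0 i ^+ 2.
Proof. by rewrite /nrm2 mxE; apply: eq_bigr => i _; rewrite mxE expr2. Qed.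

Lemma nrm2_ge0 n (v : 'rV[R]_n) : 0 <= nrm2 v.
Proof. by rewrite nrm2E sumr_ge0 // => i _; rewrite sqr_ge0. Qed.

Lemma nrm2_eq0 n (v : 'rV[R]_n) : nrm2 v = 0 -> v = 0.
Proof.
rewrite nrm2E => /eqP; rewrite psumr_eq0 => [/allP H|i _]; last by rewrite sqr_ge0.
apply/rowP => i; rewrite mxE; apply/eqP; rewrite -sqrf_eq0.
by apply: (implyP (H i (mem_index_enum _))).
Qed.

Lemma bilDl n (S : 'M[R]_n) u1 u2 v : bil S (u1 + u2) v = bil S u1 v + bil S u2 v.
Proof. by rewrite /bil !mulmxDl mxE. Qed.
Lemma bilDr n (S : 'M[R]_n) u v1 v2 : bil S u (v1 + v2) = bil S u v1 + bil S u v2.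
Proof. by rewrite /bil linearD /= mulmxDr mxE. Qed.
Lemma bilZl n (S : 'M[R]_n) k u v : bil S (k *: u) v = k * bil S u v.
Proof. by rewrite /bil -!scalemxAl mxE. Qed.
Lemma bilZr n (S : 'M[R]_n) k u v : bil S u (k *: v) = k * bil S u v.
Proof. by rewrite /bil linearZ /= -scalemxAr mxE. Qed.
Lemma bil_sym n (S : 'M[R]_n) u v : S^T = S -> bil S u v = bil S v u.
Proof.
move=> St; rewrite /bil -[in LHS](trmxK (u *m S *m v^T)) mxE.
by rewrite !trmx_mul trmxK St mulmxA.
Qed.
Lemma bil1 n (v : 'rV[R]_n) : bil 1%:M v v = nrm2 v.
Proof. by rewrite /bil mulmx1. Qed.
Lemma bilBl n (S : 'M[R]_n) u1 u2 v : bil S (u1 - u2) v = bil S u1 v - bil S u2 v.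
Proof. by rewrite bilDl -scaleN1r bilZl mulN1r. Qed.
Lemma bilBr n (S : 'M[R]_n) u v1 v2 : bil S u (v1 - v2) = bil S u v1 - bil S u v2.
Proof. by rewrite bilDr -scaleN1r bilZr mulN1r. Qed.
Lemma bilSD n (S T : 'M[R]_n) u v : bil (S + T) u v = bil S u v + bil T u v.
Proof. by rewrite /bil mulmxDr mulmxDl mxE. Qed.
Lemma bilSZ n (S : 'M[R]_n) k u v : bil (k *: S) u v = k * bil S u v.
Proof. by rewrite /bil -scalemxAr -scalemxAl mxE. Qed.

Lemma quad_zero (b C : R) : (forall t, 2 * t * b + t ^+ 2 * C <= 0) -> b = 0.
Proof.
move=> H; set d := `|C| + 1.
have hp : 0 < d by rewrite ltr_wpDl.
have := H (b / d).
have -> : 2 * (b / d) * b + (b / d) ^+ 2 * C = (b / d) ^+ 2 * (2 * d + C).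
  by rewrite /d; field; rewrite gt_eqF.
have HC : - C <= `|C| by rewrite -normrN ler_norm.
have hq : 0 < 2 * d + C.
  have hd : d = `|C| + 1 by [].
  rewrite hd; lra.
move=> H2; have : (b / d) ^+ 2 <= 0.
  by rewrite -(pmulr_lle0 _ hq).
rewrite le_eqVlt ltNge sqr_ge0 orbF sqrf_eq0 mulf_eq0 invr_eq0 (gt_eqF hp) orbF.
by move/eqP.
Qed.

Lemma nrm2Z n k (v : 'rV[R]_n) : nrm2 (k *: v) = k ^+ 2 * nrm2 v.
Proof. by rewrite -!bil1 bilZl bilZr mulrA expr2. Qed.

Lemma bil00 n (S : 'M[R]_n) : bil S 0 0 = 0.
Proof. by rewrite /bil !mul0mx mxE. Qed.

Lemma bil_cont n (S : 'M[R]_n) : continuous (fun v : 'rV[R]_n => bil S v v).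
Proof.
have -> : (fun v : 'rV[R]_n => bil S v v) =
   (fun v => \sum_i (v 0 i * \sum_j S i j * v 0 j)).
  by apply: funext => v; rewrite bilE.
apply: (@continuous_big R _ +%R 0 xpredT add_continuous _ (index_enum _)) => i _.
move=> v; apply: continuousM; first exact: coord_continuous.
apply: (@continuous_big R _ +%R 0 xpredT add_continuous _ (index_enum _)) => j _.
move=> w; apply: continuousM; first exact: cst_continuous.
exact: coord_continuous.
Qed.

Lemma rayleigh n (S : 'M[R]_n) : S^T = S ->
  (forall mu, eigenvalue S mu -> mu <= 0) -> forall v, bil S v v <= 0.
Proof.
move=> St Hev v0; rewrite leNgt; apply/negP => Hpos.
have nv0 : 0 < nrm2 v0.
  rewrite lt_def nrm2_ge0 andbT; apply/eqP => /nrm2_eq0 v00.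
  by move: Hpos; rewrite v00 bil00 ltxx.
pose A := [set v : 'rV[R]_n | nrm2 v = 1].
have homA y : y != 0 -> A ((Num.sqrt (nrm2 y))^-1 *: y).
  move=> y0; have ny : 0 < nrm2 y.
    rewrite lt_def nrm2_ge0 andbT; apply/eqP => /nrm2_eq0 y00.
    by move: y0; rewrite y00 eqxx.
  rewrite /A /= nrm2Z exprVn sqr_sqrtr ?(ltW ny) // mulVf // gt_eqF //.
have A0 : A !=set0.
  exists ((Num.sqrt (nrm2 v0))^-1 *: v0); apply: homA.
  by apply/eqP => v00; move: nv0; rewrite v00 -bil1 bil00 ltxx.
have cA : compact A.
  apply: bounded_closed_compact.
    exists 1; split => // M M1 v Av.
    rewrite /Num.norm /= mx_normrE; apply: bigmax_le; first by rewrite ltW // (lt_trans _ M1).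
    move=> [i j] _ /=; rewrite ord1.
    have : v 0 j ^+ 2 <= 1.
      rewrite -Av nrm2E (bigD1 j) //= lerDl sumr_ge0 // => k _; exact: sqr_ge0.
    move=> H; apply: (le_trans _ (ltW M1)).
    rewrite -(@ler_pXn2r _ 2) // ?normr_ge0 ?nnegrE // expr1n; by rewrite -normrX ger0_norm // sqr_ge0.
  have -> : A = (fun v => bil 1%:M v v) @^-1` [set 1].
    by apply: funext => v; rewrite /A /= bil1.
  apply: preimage_closed; last exact: closed_eq.
  by move=> v _; apply: bil_cont.
have [c cA' cmax] := EVT_max_rV A0 cA (continuous_subspaceT (@bil_cont n S)).
move: cA'; rewrite inE /A /= => nc.
set m := bil S c c.
have mpos : 0 < m.
  apply: (lt_le_trans _ (cmax ((Num.sqrt (nrm2 v0))^-1 *: v0) _)); last first.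
    by rewrite inE; apply: homA; apply/eqP => v00; move: nv0; rewrite v00 -bil1 bil00 ltxx.
  rewrite bilZl bilZr mulrA mulr_gt0 // mulr_gt0 // invr_gt0 sqrtr_gt0 //.
have hom y : bil S y y <= m * nrm2 y.
  have [->|y0] := eqVneq y 0; first by rewrite bil00 -bil1 bil00 mulr0.
  have := cmax _ (mem_set (homA y y0)); rewrite bilZl bilZr mulrA.
  have ny : 0 < nrm2 y.
    rewrite lt_def nrm2_ge0 andbT; apply/eqP => /nrm2_eq0 y00.
    by move: y0; rewrite y00 eqxx.
  rewrite -expr2 exprVn sqr_sqrtr ?(ltW ny) // mulrC -ler_pdivlMr ?invr_gt0 //.
  by rewrite invrK mulrC.
have S1 : (1%:M : 'M[R]_n)^T = 1%:M by rewrite trmx1.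
have key w : bil S c w = m * bil 1%:M c w.
  apply/eqP; rewrite -subr_eq0; apply/eqP.
  apply: (@quad_zero _ (bil S w w - m * nrm2 w)) => t.
  have := hom (c + t *: w).
  rewrite -!bil1 !(bilDl, bilDr, bilZl, bilZr) (@bil_sym _ S w c St) (@bil_sym _ 1%:M w c S1).
  rewrite !bil1 nc -/m.
  move=> H; nra.
set r := c *m S - m *: c.
have r0 : r = 0.
  apply: nrm2_eq0; rewrite -bil1 {1}/r bilBl bilZl.
  have -> : bil 1%:M (c *m S) r = bil S c r by rewrite /bil mulmx1.
  by rewrite key subrr.
have : eigenvalue S m.
  apply/eigenvalueP; exists c; first by apply/eqP; rewrite -subr_eq0 -/r r0.
  by apply/eqP => c0; move: nc; rewrite c0 -bil1 bil00 => /eqP; rewrite eq_sym oner_eq0.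
by move/Hev; rewrite leNgt mpos.
Qed.

Section Lap.
Variables (N : nat) (a : 'M[R]_N).
Hypothesis asym : forall i j, a i j = a j i.
Hypothesis apos : forall i j, 0 <= a i j.
Local Notation L := (laplacian a).

Lemma lapE (v : 'rV[R]_N) i : (v *m L) 0 i = \sum_j a i j * (v 0 i - v 0 j).
Proof.
rewrite mxE (bigD1 i) //= [in RHS](bigD1 i) //= subrr mulr0 add0r !mxE eqxx.
rewrite mulr_sumr -big_split /=; apply: eq_bigr => j ji.
rewrite ?mxE; case: eqP => [E|_]; first by move: ji; rewrite E eqxx.
by rewrite asym; ring.
Qed.

Lemma bilLE (v : 'rV[R]_N) : bil L v v = \sum_i (v *m L) 0 i * v 0 i.
Proof. by rewrite /bil [LHS]mxE; apply: eq_bigr => i _; rewrite [_^T _ _]mxE. Qed.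

Lemma bilL2 (v : 'rV[R]_N) :
  2 * bil L v v = \sum_i \sum_j a i j * (v 0 i - v 0 j) ^+ 2.
Proof.
rewrite bilLE mulr2n mulrDl !mul1r.
have -> : \sum_i (v *m L) 0 i * v 0 i = \sum_i \sum_j a i j * (v 0 i - v 0 j) * v 0 i.
  by apply: eq_bigr => i _; rewrite lapE mulr_suml.
rewrite [X in X + _ = _]exchange_big /= -big_split /=; apply: eq_bigr => i _.
rewrite -big_split /=; apply: eq_bigr => j _; rewrite asym; ring.
Qed.

Lemma bilL_ge0 (v : 'rV[R]_N) : 0 <= bil L v v.
Proof.
have : 0 <= 2 * bil L v v.
  by rewrite bilL2 sumr_ge0 // => i _; rewrite sumr_ge0 // => j _; rewrite mulr_ge0 // sqr_ge0.
by rewrite pmulr_rge0.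
Qed.

Lemma sumL (v : 'rV[R]_N) : \sum_i (v *m L) 0 i = 0.
Proof.
have : 2 * \sum_i (v *m L) 0 i = 0; last by move/eqP; rewrite mulf_eq0 pnatr_eq0 /= => /eqP.
rewrite mulr2n mulrDl mul1r.
have -> : \sum_i (v *m L) 0 i = \sum_i \sum_j a i j * (v 0 i - v 0 j).
  by apply: eq_bigr => i _; rewrite lapE.
rewrite [X in X + _ = _]exchange_big /= -big_split /= big1 // => i _.
by rewrite -big_split /= big1 // => j _; rewrite asym; ring.
Qed.

Hypothesis Lsym : L^T = L.

Lemma nrm2L (v : 'rV[R]_N) : nrm2 (v *m L) = bil (L *m L) v v.
Proof. by rewrite /nrm2 /bil trmx_mul Lsym !mulmxA. Qed.

Lemma specL lamN : max_eigenvalue L lamN ->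
  forall v : 'rV[R]_N, nrm2 (v *m L) <= lamN * bil L v v.
Proof.
move=> [_ Hmax] v.
have St : (L *m L - lamN *: L)^T = L *m L - lamN *: L.
  by rewrite linearB /= linearZ /= trmx_mul Lsym.
suff H : bil (L *m L - lamN *: L) v v <= 0.
  by move: H; rewrite -scaleNr bilSD bilSZ nrm2L; nra.
apply: (rayleigh St) => nu /eigenvalueP [w Hw w0]; rewrite leNgt; apply/negP => nupos.
have ELL : w *m L *m L = nu *: w + lamN *: (w *m L).
  by rewrite -mulmxA -[in LHS](subrK (lamN *: L) (L *m L)) mulmxDr Hw -scalemxAr.
set s := Num.sqrt (lamN ^+ 2 + 4 * nu).
have s0 : 0 <= s by apply: sqrtr_ge0.
have s2 : s ^+ 2 = lamN ^+ 2 + 4 * nu.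
  by rewrite sqr_sqrtr // addr_ge0 ?sqr_ge0 // mulr_ge0 // ltW.
set rp := (lamN + s) / 2; set rm := (lamN - s) / 2.
set z := w *m L - rm *: w.
have Ez : z *m L = rp *: z.
  rewrite /z mulmxBl ELL -scalemxAl scalerBr scalerA.
  have -> : nu = - (rp * rm).
    have -> : rp * rm = (lamN ^+ 2 - s ^+ 2) / 4 by rewrite /rp /rm; field.
    by rewrite s2; field.
  have -> : lamN = rp + rm by rewrite /rp /rm; field.
  by apply/rowP => j; rewrite !mxE; ring.
have [z0|zn0] := eqVneq z 0.
  have Ew : w *m L = rm *: w by apply/eqP; rewrite -subr_eq0 -/z z0.
  have : 0 <= bil L w w by apply: bilL_ge0.
  rewrite /bil Ew -scalemxAl mxE -/(nrm2 w) => H.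
  have nw : 0 < nrm2 w.
    by rewrite lt_def nrm2_ge0 andbT; apply/eqP => /nrm2_eq0 ww; move: w0; rewrite ww eqxx.
  have rm0 : 0 <= rm by rewrite -(pmulr_lge0 _ nw).
  move: rm0; rewrite /rm; nra.
have ev : eigenvalue L rp by apply/eigenvalueP; exists z.
have := Hmax rp ev.
rewrite /rp; nra.
Qed.
End Lap.
End LA.

Section DoS.
Variable R : realType.
Variables (K : option nat) (h tau : nat -> R).
Hypothesis hD : DoS_seq K h tau.

Lemma in_seq_le n m : (n <= m)%N -> in_seq K m -> in_seq K n.
Proof. by case: K => //= m' nm; apply: leq_ltn_trans. Qed.

Lemma h_incr n m : (n < m)%N -> in_seq K m -> h n < h m.
Proof.
elim: m => // m IH; rewrite ltnS => nm Sm.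
have [_ [t0 hs]] := hD.
have hm : h m < h m.+1.
  have := hs m Sm; have := t0 m (in_seq_le (leqnSn m) Sm); lra.
case: (ltngtP n m) nm => // [nm _|-> _ //].
exact: lt_trans (IH nm (in_seq_le (leqnSn m) Sm)) hm.
Qed.

Lemma h_ge0 n : in_seq K n -> 0 <= h n.
Proof.
move=> Hn; have [h0 _] := hD.
have H0 := h0 (in_seq_le (leq0n n) Hn).
case: n Hn => // n Hn; exact: le_trans H0 (ltW (h_incr (ltn0Sn n) Hn)).
Qed.

Lemma pulse_bound (t B : R) (n : nat) : Defs.card_le (pulse_times K h `&` `[0, t]) B ->
  in_seq K n -> h n <= t -> (n.+1)%:R <= B.
Proof.
move=> Hc Hn hnt.
have := Hc (map h (iota 0 n.+1)); rewrite size_map size_iota; apply.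
  rewrite map_inj_in_uniq ?iota_uniq // => j j'; rewrite !mem_iota !leq0n /= !add0n => jn jpn; rewrite !ltnS in jn jpn.
  move=> E; case: (ltngtP j j') => // jj'.
    by move: (h_incr jj' (in_seq_le jpn Hn)); rewrite E ltxx.
  by move: (h_incr jj' (in_seq_le jn Hn)); rewrite E ltxx.
move=> y /mapP [j]; rewrite mem_iota leq0n /= add0n => jn ->; rewrite ltnS in jn; split.
  by exists j => //; apply: (in_seq_le jn Hn).
rewrite /= in_itv /=; apply/andP; split; first exact: h_ge0 (in_seq_le jn Hn).
apply: le_trans hnt; case: (ltngtP j n) jn => // [jn' _|-> //].
exact: ltW (h_incr jn' Hn).
Qed.

Lemma H_meas n : measurable (H_set h tau n).
Proof.
have -> : H_set h tau n = [set h n] `|` `[h n, h n + tau n[%classic.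
  apply/seteqP; split => y /=.
    by case => [->|[h1 h2]]; [left | right; rewrite in_itv /= h1 h2].
  by case => [->|]; [left | rewrite in_itv /= => /andP[h1 h2]; right].
by apply: measurableU; [exact: measurable_set1|exact: measurable_itv].
Qed.

Lemma Xi_meas t : measurable (Xi K h tau 0 t).
Proof.
apply: measurableI; last exact: measurable_itv.
by apply: bigcup_measurable => k _; apply: H_meas.
Qed.

Variable D : R.
Fixpoint Gs (M : nat) : set R :=
  if M is M'.+1 then Gs M' `|` `[h M' - D, h M'[%classic else set0.

Lemma Gs_meas M : measurable (Gs M).
Proof. by elim: M => [|M IH] /=; [exact: measurable0|apply: measurableU => //; exact: measurable_itv]. Qed.

Lemma Gs_sub M n : (n < M)%N -> `[h n - D, h n[%classic `<=` Gs M.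
Proof.
elim: M => // M IH; rewrite ltnS leq_eqVlt => /orP [/eqP ->|nM] y Hy /=; first by right.
by left; apply: IH.
Qed.

Lemma itv_measure (u v : R) : u <= v ->
  (lebesgue_measure (`[u, v[%classic : set R) <= (v - u)%:E)%E.
Proof.
move=> uv; have := lebesgue_measure_itv `[u, v[; rewrite /= lte_fin.
move=> ->; case: ifP => _; first by rewrite -EFinB.
by rewrite lee_fin subr_ge0.
Qed.

Lemma Gs_measure M : 0 <= D -> (lebesgue_measure (Gs M) <= (M%:R * D)%:E)%E.
Proof.
move=> D0; elim: M => [|M IH] /=; first by rewrite measure0 mul0r.
apply: le_trans (measureU2 lebesgue_measure (Gs_meas M) (measurable_itv _)) _.
have H2 := itv_measure (_ : h M - D <= h M).
apply: le_trans (leeD IH (H2 _)) _; first by lra.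
by rewrite -EFinD lee_fin -[X in _ <= X * _]natr1 mulrDl mul1r; lra.
Qed.
End DoS.

Section TS.
Variables (R : realType) (ts : nat -> R) (Dlow : R).
Hypotheses (Dl0 : 0 < Dlow) (Dl : forall k, Dlow <= ts k.+1 - ts k).

Lemma ts_step k : ts k < ts k.+1.
Proof. by have := Dl k; have := Dl0; lra. Qed.

Lemma ts_mono k l : (k <= l)%N -> ts k <= ts l.
Proof.
elim: l => [|l IH]; first by rewrite leqn0 => /eqP ->.
rewrite leq_eqVlt => /orP [/eqP -> //|kl].
exact: le_trans (IH kl) (ltW (ts_step l)).
Qed.

Lemma ts_lb k : ts 0 + k%:R * Dlow <= ts k.
Proof.
elim: k => [|k IH]; first by rewrite mul0r addr0.
have := Dl k; rewrite -natr1 mulrDl mul1r; lra.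
Qed.

Lemma ts_large (T : R) : exists k, T < ts k.
Proof.
exists (Num.truncn ((`|T| + `|ts 0|) / Dlow)).+1.
set m := (Num.truncn _).+1.
have hm : (`|T| + `|ts 0|) / Dlow < m%:R by apply: truncnS_gt.
have := ts_lb m.
have : `|T| + `|ts 0| < m%:R * Dlow by rewrite -ltr_pdivrMr.
have := ler_norm T; have := ler_norm (- ts 0); rewrite normrN; lra.
Qed.

Lemma ts_bracket s : ts 0 <= s -> exists k, ts k <= s < ts k.+1.
Proof.
move=> s0; have [m sm] := ts_large s.
elim: m sm => [|m IH] sm; first by move: s0; rewrite leNgt sm.
have [smm|] := ltP s (ts m); first exact: IH.
by move=> tms; exists m; rewrite tms sm.
Qed.
End TS.

Lemma inf_good (R : realType) (K : option nat) (h tau : nat -> R)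
  (ts : nat -> R) (tcheck Dlow Dbar Bd Bf : R) :
  DoS_seq K h tau -> ts 0%N = 0 -> 0 < Dlow ->
  (forall k, Dlow <= ts k.+1 - ts k) -> 0 <= tcheck ->
  (forall k, tcheck <= ts k -> ts k.+1 - ts k <= Dbar) ->
  duration_bound K h tau Bd -> frequency_bound K h Bf -> Bd + Bf * Dbar < 1 ->
  forall n, exists k, (n <= k)%N /\ ~ Xi_all K h tau (ts k).
Proof.
move=> hD ts0 Dl0 Dl tc0 Dbar_ok [Bd01 [kappa [kappa0 Hkappa]]] [Bf0 [Lambda [_ HL]]] Hsum n.
apply: contrapT => Hno.
have Hall k : (n <= k)%N -> Xi_all K h tau (ts k).
  by move=> nk; apply: contrapT => nX; apply: Hno; exists k.
have [m0 hm0] := ts_large Dl0 Dl tcheck.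
set k0 := (n + m0)%N.
set T := ts k0.
have T_tc : tcheck <= T by apply: le_trans (ltW hm0) (ts_mono Dl0 Dl (leq_addl _ _)).
have T0 : 0 <= T by apply: le_trans T_tc.
have Dbar0 : 0 < Dbar.
  by have := Dbar_ok k0 T_tc; have := Dl k0; lra.
have claim s : T <= s -> ~ Xi_all K h tau s ->
    exists n', in_seq K n' /\ s < h n' <= s + Dbar.
  move=> Ts nXs.
  have s0' : ts 0 <= s by rewrite ts0; apply: le_trans Ts.
  have [k /andP [ks sk]] := ts_bracket Dl0 Dl s0'.
  have k0k : (k0 <= k)%N.
    rewrite leqNgt; apply/negP => kk0.
    by move: (ts_mono Dl0 Dl kk0); rewrite -/T; move: sk Ts; lra.
  have [n' Hn' Hh] := Hall k.+1 (leq_trans (leq_addr _ _) (leqW k0k)).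
  exists n'; split => //.
  have hle : h n' <= ts k.+1 by case: Hh => [->|[]] //; lra.
  apply/andP; split.
    rewrite ltNge; apply/negP => hs; apply: nXs; exists n' => //.
    right; split => //; case: Hh => [E|[_ ?]]; first by move: sk; rewrite E; lra.
    by apply: lt_trans sk _.
  have := Dbar_ok k (le_trans T_tc (ts_mono Dl0 Dl k0k)); lra.
set del := 1 - Bd - Bf * Dbar.
have del0 : 0 < del by rewrite /del; lra.
set C := kappa + T + Dbar * (Lambda%:R + Bf * Dbar + 1).
have C0 : 0 <= C.
  rewrite /C addr_ge0 // ?addr_ge0 // ?(ltW kappa0) // mulr_ge0 // ?(ltW Dbar0) //.
  by rewrite addr_ge0 // addr_ge0 // mulr_ge0 // ltW.
set t := C / del + T + 1.
have tT : T <= t.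
  have : 0 <= C / del by rewrite divr_ge0 // ltW.
  rewrite /t; lra.
have tdel : t * del = C + del * (T + 1) by rewrite /t; field; rewrite gt_eqF.
set B := Lambda%:R + Bf * (t + Dbar).
have B0 : 0 <= B by rewrite /B addr_ge0 // mulr_ge0 //; lra.
set M := (Num.truncn B).+1.
have BM : B < M%:R by apply: truncnS_gt.
have MB : M%:R <= B + 1 by rewrite /M -natr1 lerD2r truncn_le.
have cover : `[T, t]%classic `<=` Xi K h tau 0 t `|` Gs h Dbar M.
  move=> s /=; rewrite in_itv /= => /andP [Ts st].
  have [Xs|nXs] := pselect (Xi_all K h tau s).
    by left; split => //=; rewrite in_itv /= st andbT; apply: le_trans Ts.
  right; have [n' [Hn' /andP [sh hs]]] := claim s Ts nXs.
  have n'M : (n' < M)%N.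
    have H1 : 0 <= t + Dbar by lra.
    have H2 : h n' <= t + Dbar by lra.
    have hB := pulse_bound hD (HL _ H1) Hn' H2.
    have : (n'.+1 < M)%N by rewrite -(ltr_nat R); exact: le_lt_trans hB BM.
    exact: ltnW.
  apply: (Gs_sub n'M); rewrite /= in_itv /=; apply/andP; split; lra.
have mXi : measurable (Xi K h tau 0 t) by apply: Xi_meas.
have := le_measure lebesgue_measure (mem_set (measurable_itv `[T, t]))
  (mem_set (measurableU _ _ mXi (Gs_meas h Dbar M))) cover.
move=> H1.
have H2 := measureU2 lebesgue_measure mXi (Gs_meas h Dbar M).
have H3 := Hkappa t (le_trans T0 tT).
have H4 := Gs_measure h M (ltW Dbar0).
have H5 := @lebesgue_measure_itv R (Interval (BLeft T) (BRight t)).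
move: H5; rewrite /= lte_fin.
have Tt : T < t.
  have : 0 <= C / del by rewrite divr_ge0 // ltW.
  rewrite /t; lra.
rewrite Tt => /eqP; rewrite eq_le => /andP [_ H5].
have := le_trans H5 (le_trans H1 (le_trans H2 (leeD H3 H4))).
rewrite -EFinB -EFinD lee_fin => H6.
have H7 : M%:R * Dbar <= (B + 1) * Dbar by rewrite ler_wpM2r // ltW.
move: H6 H7; rewrite /B => H6 H7.
have : t * del <= C.
  rewrite /del /C; move: H6 H7; nra.
rewrite tdel; have : 0 < del * (T + 1) by rewrite mulr_gt0 //; lra.
lra.
Qed.

Section Aux.
Variable R : realType.

Definition tend0 (u : nat -> R) :=
  forall e, 0 < e -> exists M, forall k, (M <= k)%N -> `|u k| <= e.

Lemma tend0_ext (u v : nat -> R) : (forall k, u k = v k) -> tend0 u -> tend0 v.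
Proof. by move=> E H e e0; have [M HM] := H e e0; exists M => k Mk; rewrite -E; apply: HM. Qed.

Lemma tend0_scale (u : nat -> R) c : tend0 u -> tend0 (fun k => c * u k).
Proof.
move=> H e e0; have [M HM] := H (e / (`|c| + 1)) (divr_gt0 e0 (ltr_wpDl (normr_ge0 c) ltr01)).
exists M => k Mk; rewrite normrM.
have hc : 0 < `|c| + 1 by rewrite ltr_wpDl.
apply: le_trans (_ : (`|c| + 1) * `|u k| <= e).
  by rewrite ler_wpM2r // lerDl.
by rewrite mulrC -ler_pdivlMr // HM.
Qed.

Lemma tend0_add (u v : nat -> R) : tend0 u -> tend0 v -> tend0 (fun k => u k + v k).
Proof.
move=> Hu Hv e e0; have e20 : 0 < e / 2 by rewrite divr_gt0.
have [M1 H1] := Hu _ e20; have [M2 H2] := Hv _ e20.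
exists (maxn M1 M2) => k; rewrite geq_max => /andP [k1 k2].
apply: le_trans (ler_normD _ _) _.
have := H1 k k1; have := H2 k k2; lra.
Qed.

Lemma tend0_sum n (u : 'I_n -> nat -> R) :
  (forall j, tend0 (u j)) -> tend0 (fun k => \sum_j u j k).
Proof.
move=> H; rewrite /index_enum; elim: (Finite.enum _) => [|j r IH].
  apply: (@tend0_ext (fun=> 0)); first by move=> k; rewrite big_nil.
  by move=> e e0; exists 0%N => k _; rewrite normr0 ltW.
apply: (@tend0_ext (fun k => u j k + \sum_(i <- r) u i k)).
  by move=> k; rewrite big_cons.
exact: tend0_add.
Qed.

Lemma interp_bound (a b s D U e : R) : 0 <= s <= D -> 0 < D -> b = a + D * U ->
  `|a| <= e -> `|b| <= e -> `|a + s * U| <= e.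
Proof.
move=> /andP [s0 sD] D0 Eb; rewrite !ler_norml => /andP [a1 a2] /andP [b1 b2].
have -> : a + s * U = a + (s / D) * (b - a) by rewrite Eb; field; rewrite gt_eqF.
have t0 : 0 <= s / D by rewrite divr_ge0 // ltW.
have t1 : s / D <= 1 by rewrite ler_pdivrMr // mul1r.
set th := s / D in t0 t1 *.
apply/andP; split; nra.
Qed.

Lemma sq_le_norm (d e : R) : 0 <= e -> d ^+ 2 <= e ^+ 2 -> `|d| <= e.
Proof.
move=> e0 H; rewrite -(@ler_pXn2r _ 2) ?nnegrE ?normr_ge0 //.
by rewrite -normrX ger0_norm // sqr_ge0.
Qed.
End Aux.

Unset Implicit Arguments. Set Strict Implicit.
Theorem lemma3 (R : realType) (N : nat) (a : 'M[R]_N)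
  (K : option nat) (h tau : nat -> R)
  (ts : nat -> R) (tcheck Dlow Dbar lamN Bd Bf : R)
  (x : 'I_N -> R -> R) :
  (forall i j, a i j = 0 \/ a i j = 1) ->
  (laplacian a)^T = laplacian a ->
  irreducible_mx (laplacian a) ->
  max_eigenvalue (laplacian a) lamN ->
  DoS_seq K h tau ->
  ~ edge_case K h tau ->
  ts 0%N = 0 ->
  0 < Dlow ->
  (forall k, Dlow <= ts k.+1 - ts k) ->
  0 <= tcheck ->
  (forall k, tcheck <= ts k -> ts k.+1 - ts k <= Dbar) ->
  `|1 - Dbar * lamN| < 1 ->
  duration_bound K h tau Bd ->
  frequency_bound K h Bf ->
  Bd + Bf * Dbar < 1 ->
  (forall k i, {within `[ts k, ts k.+1], continuous (x i)}) ->
  (forall k i t, ts k < t < ts k.+1 ->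
     is_derive t 1 (x i) (ctrl_input a K h tau x (ts k) i)) ->
  forall i : 'I_N,
    (x i t - (\sum_(j < N) x j 0) / N%:R) @[t --> +oo] --> 0.
Proof.
move=> a01 Lsym Lirr Lmax hD _ ts0 Dl0 Dl tc0 Dbar_ok Habs dB fB Hsum xcont xder i.
set L := laplacian a.
have asym : forall j j', a j j' = a j' j.
  move=> j j'; have [->//|jj'] := eqVneq j j'.
  have := congr1 (fun M : 'M[R]_N => M j j') Lsym; rewrite /= !mxE eq_sym (negbTE jj').
  by move/eqP; rewrite eqr_opp => /eqP.
have apos : forall j j', 0 <= a j j' by move=> j j'; case: (a01 j j') => ->.
have N0 : (0 < N)%N by apply: leq_ltn_trans (leq0n i) (ltn_ord i).
set c := (\sum_(j < N) x j 0) / N%:R.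
pose U k j := ctrl_input a K h tau x (ts k) j.
pose E k : 'rV[R]_N := \row_j (x j (ts k) - c).
pose good k := ~ Xi_all K h tau (ts k).
have aff k j t : ts k <= t <= ts k.+1 -> x j t = x j (ts k) + (t - ts k) * U k j.
  move=> /andP [kt tk]; have [->|kt'] := eqVneq t (ts k); first by rewrite subrr mul0r addr0.
  have kt2 : ts k < t by rewrite lt_def kt' kt.
  have Hd : forall y, y \in `]ts k, t[ -> is_derive y 1 (x j) ((fun=> U k j) y).
    move=> y; rewrite in_itv /= => /andP [y1 y2]; apply: xder.
    by rewrite y1 /=; apply: lt_le_trans tk.
  have Hc : {within `[ts k, t], continuous (x j)}.
    apply: continuous_subspaceW (xcont k j) => y /=; rewrite !in_itv /= => /andP [y1 y2].
    by rewrite y1 /=; apply: le_trans tk.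
  have [y _ Hy] := MVT kt2 Hd Hc.
  by rewrite -[x j t](subrK (x j (ts k))) Hy /=; ring.
have Ustep k j : U k j = if `[< Xi_all K h tau (ts k) >] then 0 else - (E k *m L) 0 j.
  rewrite /U /ctrl_input; case: ifP => // _.
  rewrite (lapE asym) -sumrN; apply: eq_bigr => j' _; rewrite !mxE; ring.
have tsS k : ts k <= ts k.+1 by apply: ltW (ts_step Dl0 Dl k).
have Xstep k j : x j (ts k.+1) = x j (ts k) + (ts k.+1 - ts k) * U k j.
  by apply: aff; rewrite tsS lexx.
have sumU k : \sum_j U k j = 0.
  under eq_bigr do rewrite Ustep.
  case: (`[< Xi_all K h tau (ts k) >]); first by rewrite big1.
  by rewrite sumrN (sumL asym) oppr0.
have sumX k : \sum_j x j (ts k) = \sum_j x j 0.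
  elim: k => [|k IH]; first by rewrite ts0.
  rewrite -IH (eq_bigr _ (fun j _ => Xstep k j)) big_split /= -mulr_sumr sumU.
  by rewrite mulr0 addr0.
have sumE k : \sum_j E k 0 j = 0.
  under eq_bigr do rewrite mxE.
  rewrite sumrB sumX sumr_const card_ord -mulr_natr /c divfK ?subrr //.
  by rewrite pnatr_eq0 -lt0n N0.
have Estep k : E k.+1 = E k - (if `[< Xi_all K h tau (ts k) >] then 0 else ts k.+1 - ts k) *: (E k *m L).
  apply/rowP => j; rewrite [LHS]mxE Xstep Ustep !mxE.
  by case: (`[< Xi_all K h tau (ts k) >]); ring.
have [k1 hk1] := ts_large Dl0 Dl tcheck.
have Dbar0 : 0 < Dbar.
  by have := Dbar_ok k1 (ltW hk1); have := Dl k1; lra.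
have [lam0 lam2] : 0 < lamN /\ Dbar * lamN < 2.
  move: Habs; rewrite ltr_norml => /andP [H1 H2].
  split; last by lra.
  rewrite ltNge; apply/negP => HH.
  have : Dbar * lamN <= 0 by rewrite pmulr_rle0.
  lra.
set gam := Dlow * (2 - Dbar * lamN).
have gam0 : 0 < gam by rewrite mulr_gt0 // subr_gt0.
have bil1L (e : 'rV[R]_N) : bil 1%:M e (e *m L) = bil L e e.
  by rewrite /bil mulmx1 trmx_mul Lsym mulmxA.
have Vgood k : tcheck <= ts k -> ~ Xi_all K h tau (ts k) ->
    nrm2 (E k.+1) <= nrm2 (E k) - gam * bil L (E k) (E k).
  move=> tck gk; rewrite Estep asboolF //.
  set e := E k; set D := ts k.+1 - ts k.
  have Q0 : 0 <= bil L e e by apply: bilL_ge0.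
  have hn := specL asym apos Lsym Lmax e.
  have HD1 : Dlow <= D by apply: Dl.
  have HD2 : D <= Dbar by apply: Dbar_ok.
  rewrite -!bil1 bilBl !bilBr !bilZl !bilZr bil1L (@bil_sym _ _ 1%:M (e *m L) e (trmx1 _ _)) bil1L.
  rewrite !bil1 -/(nrm2 e).
  have h1 : D * D * nrm2 (e *m L) <= D * D * (lamN * bil L e e).
    by rewrite ler_wpM2l // mulr_ge0 //; lra.
  have h2 : D * D * (lamN * bil L e e) <= D * Dbar * (lamN * bil L e e).
    rewrite ler_wpM2r //; first by rewrite mulr_ge0 // ltW.
    by rewrite ler_wpM2l //; lra.
  have h3 : Dlow * (2 - Dbar * lamN) * bil L e e <= D * (2 - Dbar * lamN) * bil L e e.
    by rewrite ler_wpM2r // ler_wpM2r //; lra.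
  rewrite /gam; nra.
have Vbad k : Xi_all K h tau (ts k) -> E k.+1 = E k.
  by move=> X; rewrite Estep asboolT // scale0r subr0.
have tck_of k : (k1 <= k)%N -> tcheck <= ts k.
  by move=> kk; apply: le_trans (ltW hk1) (ts_mono Dl0 Dl kk).
have Vmono k d : (k1 <= k)%N -> nrm2 (E (k + d)%N) <= nrm2 (E k).
  move=> kk; elim: d => [|d IH]; first by rewrite addn0.
  rewrite addnS; apply: le_trans IH.
  have tck : tcheck <= ts (k + d)%N by apply: tck_of; apply: leq_trans kk (leq_addr d k).
  have [X|nX] := pselect (Xi_all K h tau (ts (k + d)%N)); first by rewrite Vbad.
  apply: le_trans (Vgood _ tck nX) _; rewrite lerBlDr lerDl mulr_ge0 ?(ltW gam0) //.
  exact: (bilL_ge0 asym apos).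
have next k : exists k', [/\ (k <= k')%N, ~ Xi_all K h tau (ts k') & E k' = E k].
  have [k2 [kk2 gk2]] := inf_good hD ts0 Dl0 Dl tc0 Dbar_ok dB fB Hsum k.
  suff H : forall d k, ~ Xi_all K h tau (ts (k + d)%N) ->
      exists k', [/\ (k <= k')%N, ~ Xi_all K h tau (ts k') & E k' = E k].
    by apply: (H (k2 - k)%N k); rewrite subnKC.
  elim => [|d IH] k' g; first by exists k'; rewrite addn0 in g; split.
  have [X|nX] := pselect (Xi_all K h tau (ts k')); last by exists k'.
  have g' : ~ Xi_all K h tau (ts (k'.+1 + d)%N) by rewrite addSnnS.
  have [k'' [h1 h2 h3]] := IH k'.+1 g'.
  by exists k''; split => //; [exact: ltnW | rewrite h3 Vbad].
have Qto0 : tend0 (fun k => bil L (E k) (E k)).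
  move=> e e0; apply: contrapT => Hno.
  have Hinf : forall M, exists k, (M <= k)%N /\ e < bil L (E k) (E k).
    move=> M; apply: contrapT => H; apply: Hno; exists M => k Mk.
    rewrite ger0_norm ?(bilL_ge0 asym apos) // leNgt; apply/negP => ek; apply: H; by exists k.
  have dec : forall m : nat, exists k, (k1 <= k)%N /\
      nrm2 (E k) <= nrm2 (E k1) - m%:R * (gam * e).
    elim => [|m [k [kk Hk]]]; first by exists k1; rewrite mul0r subr0.
    have [k2 [kk2 ek2]] := Hinf k.
    have [k3 [kk3 g3 E3]] := next k2.
    have kk3' : (k1 <= k3)%N by apply: leq_trans kk (leq_trans kk2 kk3).
    exists k3.+1; split; first exact: leqW.
    have H := Vgood k3 (tck_of _ kk3') g3.
    have := Vmono k (k3 - k)%N kk; rewrite subnKC ?(leq_trans kk2 kk3) // => H2.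
    have Q3 : gam * e <= gam * bil L (E k3) (E k3).
      by rewrite E3 ler_wpM2l // ?ltW.
    move: H H2 Q3 Hk; rewrite -natr1; lra.
  set m := (Num.truncn (nrm2 (E k1) / (gam * e))).+1.
  have [k [_ Hk]] := dec m.
  have hm : nrm2 (E k1) / (gam * e) < m%:R by apply: truncnS_gt.
  have ge0 : 0 < gam * e by rewrite mulr_gt0.
  have hm' : nrm2 (E k1) < m%:R * (gam * e) by rewrite -ltr_pdivrMr.
  have := nrm2_ge0 (E k); lra.
have edge j j' : a j j' = 1 -> tend0 (fun k => E k 0 j - E k 0 j').
  move=> ajj e e0.
  have [M HM] := Qto0 (e ^+ 2 / 2) (divr_gt0 (exprn_gt0 2 e0) (ltr0n _ 2)).
  exists M => k Mk; apply: sq_le_norm (ltW e0) _.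
  have := HM k Mk; rewrite ger0_norm ?(bilL_ge0 asym apos) // => HQ.
  have H2 := bilL2 asym (E k).
  have : a j j' * (E k 0 j - E k 0 j') ^+ 2 <= 2 * bil L (E k) (E k).
    rewrite H2 (bigD1 j) //= (bigD1 j') //= -addrA lerDl.
    apply: addr_ge0.
      by apply: sumr_ge0 => l _; rewrite mulr_ge0 // sqr_ge0.
    by apply: sumr_ge0 => l _; apply: sumr_ge0 => l' _; rewrite mulr_ge0 // sqr_ge0.
  rewrite ajj mul1r => H; move: HQ; lra.
have Hall : forall j, tend0 (fun k => E k 0 j - E k 0 i).
  pose S := finset.finset (fun j => `[< tend0 (fun k => E k 0 j - E k 0 i) >]).
  suff ST : S = finset.setT.
    move=> j; have : j \in S by rewrite ST finset.in_setT.
    by rewrite finset.in_set => /asboolP.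
  apply/eqP; apply: contraT => ST.
  have S0 : S != finset.set0.
    apply/finset.set0Pn; exists i; rewrite finset.in_set; apply/asboolP.
    by move=> e e0; exists 0%N => k _; rewrite subrr normr0 ltW.
  have [j1 [j2 [j1S j2S Lj]]] := Lirr S S0 ST.
  have j12 : j1 != j2 by apply/eqP => E12; move: j2S; rewrite -E12 j1S.
  have a12 : a j1 j2 = 1.
    case: (a01 j1 j2) => // a0; move: Lj; rewrite /L mxE (negbTE j12) a0 oppr0.
    by rewrite eqxx.
  move: j1S j2S; rewrite !finset.in_set => /asboolP H1 /negP nb; exfalso; apply: nb; apply/asboolP.
  apply: (@tend0_ext _ (fun k => (E k 0 j1 - E k 0 i) + (-1) * (E k 0 j1 - E k 0 j2))).
    by move=> k; ring.
  by apply: tend0_add => //; apply: tend0_scale; apply: edge.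
have Ei : tend0 (fun k => E k 0 i).
  apply: (@tend0_ext _ (fun k => (- (N%:R)^-1) * \sum_j (E k 0 j - E k 0 i))).
    move=> k; rewrite sumrB sumE sumr_const card_ord -mulr_natr; field.
    by rewrite pnatr_eq0 -lt0n N0.
  by apply: tend0_scale; apply: tend0_sum => j; apply: Hall.
apply/cvgrPdist_le => e e0.
have [M HM] := Ei e e0.
exists (ts M); split; first by rewrite num_real.
move=> t Mt; rewrite sub0r normrN.
have t0 : ts 0 <= t by apply: le_trans (ts_mono Dl0 Dl (leq0n M)) (ltW Mt).
have [k /andP [kt tk]] := ts_bracket Dl0 Dl t0.
have Mk : (M <= k)%N.
  rewrite leqNgt; apply/negP => kM.
  by have := ts_mono Dl0 Dl kM; move: Mt tk; lra.
rewrite (aff k i t); last by rewrite kt ltW.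
have -> : x i (ts k) + (t - ts k) * U k i - c = (x i (ts k) - c) + (t - ts k) * U k i by ring.
apply: (@interp_bound _ _ (x i (ts k.+1) - c) _ (ts k.+1 - ts k)).
- by apply/andP; split; lra.
- by have := ts_step Dl0 Dl k; lra.
- by rewrite Xstep; ring.
- by have := HM k Mk; rewrite mxE.
- by have := HM k.+1 (leqW Mk); rewrite mxE.
Qed.
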